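(* Let $(M,g)$ be a Ricci-flat Riemannian $4$-manifold. For $p \in M$ let $K_{max}(p)$ (respectively $K_{min}(p)$) denote the maximum (respectively the minimum) of the sectional curvatures of $2$-planes in $T_pM$. Then $$-\tfrac{1}{2}K_{min}(p) \le K_{max}(p) \le -2K_{min}(p)$$ for every $p \in M$. *)

(* Defs.v *)
From mathcomp Require Import all_boot all_order all_algebra.
From mathcomp Require Import boolp classical_sets reals.
Set Implicit Arguments. Unset Strict Implicit. Unset Printing Implicit Defensive.
Import Order.TTheory GRing.Theory Num.Theory.
Local Open Scope ring_scope.
Local Open Scope classical_set_scope.

(* The tangent space T_pM of a Riemannian 4-manifold at p, with an
   orthonormal basis, is identified isometrically with Euclidean R^4.
   The Riemann curvature tensor at p is given by its components
   Rm i j k l = R(e_i,e_j,e_k,e_l) in that orthonormal basis. *)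

Section Defs.
Variable R : realType.

Definition vec4 := 'rV[R]_4.

Definition dot4 (u v : vec4) : R := \sum_(i < 4) u 0 i * v 0 i.

Definition curv4 (Rm : 'I_4 -> 'I_4 -> 'I_4 -> 'I_4 -> R) (x y z w : vec4) : R :=
  \sum_(i < 4) \sum_(j < 4) \sum_(k < 4) \sum_(l < 4)
     Rm i j k l * x 0 i * y 0 j * z 0 k * w 0 l.

Definition is_curvature_tensor (Rm : 'I_4 -> 'I_4 -> 'I_4 -> 'I_4 -> R) : Prop :=
  [/\ (forall i j k l, Rm i j k l = - Rm j i k l),
      (forall i j k l, Rm i j k l = - Rm i j l k),
      (forall i j k l, Rm i j k l = Rm k l i j) &
      (forall i j k l, Rm i j k l + Rm j k i l + Rm k i j l = 0)].

Definition ricci (Rm : 'I_4 -> 'I_4 -> 'I_4 -> 'I_4 -> R) (j k : 'I_4) : R :=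
  \sum_(i < 4) Rm i j k i.

Definition ricci_flat (Rm : 'I_4 -> 'I_4 -> 'I_4 -> 'I_4 -> R) : Prop :=
  forall j k, ricci Rm j k = 0.

Definition lin_indep2 (u v : vec4) : Prop :=
  forall a b : R, a *: u + b *: v = 0 -> a = 0 /\ b = 0.

Definition sectional (Rm : 'I_4 -> 'I_4 -> 'I_4 -> 'I_4 -> R) (u v : vec4) : R :=
  curv4 Rm u v v u / (dot4 u u * dot4 v v - (dot4 u v) ^+ 2).

Definition sectional_values (Rm : 'I_4 -> 'I_4 -> 'I_4 -> 'I_4 -> R) : set R :=
  [set x | exists u v : vec4, lin_indep2 u v /\ x = sectional Rm u v].

(* K_max and K_min: max/min of the sectional curvatures (attained, by compactness
   of the Grassmannian, so they equal sup/inf) *)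
Definition Kmax (Rm : 'I_4 -> 'I_4 -> 'I_4 -> 'I_4 -> R) : R := sup (sectional_values Rm).
Definition Kmin (Rm : 'I_4 -> 'I_4 -> 'I_4 -> 'I_4 -> R) : R := inf (sectional_values Rm).

End Defs.

(* Main.v *)
Require Import Defs.
From mathcomp Require Import all_boot all_order all_algebra.
From mathcomp Require Import boolp classical_sets reals.
From mathcomp Require Import ring lra.
Import Order.TTheory GRing.Theory Num.Theory.
Local Open Scope ring_scope.
Section SetL.
Local Open Scope classical_set_scope.



Lemma set_ineq (R : realType) (S : set R) :
  (forall x, S x -> (exists y, S y /\ y <= - x / 2) /\ (exists y, S y /\ - x / 2 <= y)) ->
  - (1 / 2) * inf S <= sup S /\ sup S <= - 2 * inf S.
Proof.
move=> H.
have [[x0 Sx0]|S0] := pselect (S !=set0); last first.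
  have -> : S = set0 by apply/seteqP; split => x // Sx; apply: S0; exists x.
  by rewrite sup0 inf0; split; lra.
have ub_lb : has_ubound S -> has_lbound S.
  case=> M HM; exists (- 2 * M) => x Sx.
  have [_ [y [Sy Hy]]] := H x Sx; have := HM y Sy; rewrite /=; lra.
have lb_ub : has_lbound S -> has_ubound S.
  case=> M HM; exists (- 2 * M) => x Sx.
  have [[y [Sy Hy]] _] := H x Sx; have := HM y Sy; rewrite /=; lra.
have [hu|hu] := pselect (has_ubound S); last first.
  have hl : ~ has_lbound S by move/lb_ub.
  rewrite sup_out; last by case.
  rewrite inf_out; last by case.
  split; lra.
have hl := ub_lb hu.
split.
  suff : - 2 * sup S <= inf S by lra.
  apply: lb_le_inf; first by exists x0.
  move=> x Sx; have [_ [y [Sy Hy]]] := H x Sx.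
  have := ub_le_sup hu Sy; rewrite /=; lra.
apply: ge_sup; first by exists x0.
move=> x Sx; have [[y [Sy Hy]] _] := H x Sx.
have := ge_inf hl Sy; rewrite /=; lra.
Qed.

End SetL.


Section Quat.
Variable R : realType.

Definition o0 : 'I_4 := @Ordinal 4 0 erefl.
Definition o1 : 'I_4 := @Ordinal 4 1 erefl.
Definition o2 : 'I_4 := @Ordinal 4 2 erefl.
Definition o3 : 'I_4 := @Ordinal 4 3 erefl.

Lemma dot4E (u v : vec4 R) : dot4 u v =
  u 0 o0 * v 0 o0 + u 0 o1 * v 0 o1 + u 0 o2 * v 0 o2 + u 0 o3 * v 0 o3.
Proof.
rewrite /dot4 !big_ord_recr big_ord0 /= add0r.
by congr (_ + _ + _ + _); congr (u 0 _ * v 0 _); apply: val_inj.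
Qed.

Definition mk4 (a b c d : R) : vec4 R := \row_(j < 4) nth 0 [:: a; b; c; d] j.

Lemma mk4E a b c d :
  [/\ (mk4 a b c d) 0 o0 = a, (mk4 a b c d) 0 o1 = b,
      (mk4 a b c d) 0 o2 = c & (mk4 a b c d) 0 o3 = d].
Proof. by rewrite /mk4 !mxE. Qed.

Definition qmul (a b : vec4 R) : vec4 R :=
  let a0 := a 0 o0 in let a1 := a 0 o1 in let a2 := a 0 o2 in let a3 := a 0 o3 in
  let b0 := b 0 o0 in let b1 := b 0 o1 in let b2 := b 0 o2 in let b3 := b 0 o3 in
  mk4 (a0*b0 - a1*b1 - a2*b2 - a3*b3)
      (a0*b1 + a1*b0 + a2*b3 - a3*b2)
      (a0*b2 - a1*b3 + a2*b0 + a3*b1)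
      (a0*b3 + a1*b2 - a2*b1 + a3*b0).

Definition qconj (a : vec4 R) : vec4 R := mk4 (a 0 o0) (- a 0 o1) (- a 0 o2) (- a 0 o3).

Ltac qsimp := rewrite ?dot4E /qmul /qconj /mk4 ?mxE /=.

Lemma Q1 (x r : vec4 R) : r 0 o0 = 0 -> dot4 (qmul x r) x = 0.
Proof. move=> r0; qsimp; rewrite r0; ring. Qed.


Lemma Q2 (x y r : vec4 R) : dot4 (qmul x r) y = dot4 r (qmul (qconj x) y).
Proof. qsimp; ring. Qed.

Lemma Q3 (x y r : vec4 R) : r 0 o0 = 0 ->
  dot4 (qmul y r) x = - dot4 r (qmul (qconj x) y).
Proof. move=> r0; qsimp; rewrite r0; ring. Qed.

Lemma Q4 (x y r : vec4 R) : dot4 (qmul x r) (qmul y r) = dot4 r r * dot4 x y.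
Proof. qsimp; ring. Qed.

Lemma dotC (x y : vec4 R) : dot4 x y = dot4 y x.
Proof. rewrite !dot4E; ring. Qed.

Lemma dotDr (x y z : vec4 R) a b : dot4 x (a *: y + b *: z) = a * dot4 x y + b * dot4 x z.
Proof. rewrite !dot4E !mxE /=; ring. Qed.

Lemma dot_eq0 (x : vec4 R) : dot4 x x = 0 -> x = 0.
Proof.
move=> H; apply/matrixP => i j; rewrite (ord1 i) mxE.
have P0 : forall k : 'I_4, true -> 0 <= x 0 k * x 0 k.
  by move=> k _; rewrite -expr2 sqr_ge0.
have := psumr_eq0P P0 H (i:=j) isT.
by move/eqP; rewrite mulf_eq0 orbb => /eqP.
Qed.

End Quat.
Arguments qmul {R}. Arguments qconj {R}. Arguments mk4 {R}.



Section Curv.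
Variable R : realType.
Variable Rm : 'I_4 -> 'I_4 -> 'I_4 -> 'I_4 -> R.
Hypothesis HRm : is_curvature_tensor Rm.
Hypothesis Hric : ricci_flat Rm.

Lemma curv_lin2 x y z w t (a b : R) :
  curv4 Rm x (a *: y + b *: z) w t = a * curv4 Rm x y w t + b * curv4 Rm x z w t.
Proof.
rewrite /curv4 !mulr_sumr -big_split; apply: eq_bigr => i _.
rewrite !mulr_sumr -big_split; apply: eq_bigr => j _.
rewrite !mulr_sumr -big_split; apply: eq_bigr => k _.
rewrite !mulr_sumr -big_split; apply: eq_bigr => l _.
rewrite !mxE /=; ring.
Qed.

Lemma curv_lin3 x y z w t (a b : R) :
  curv4 Rm x y (a *: z + b *: w) t = a * curv4 Rm x y z t + b * curv4 Rm x y w t.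
Proof.
rewrite /curv4 !mulr_sumr -big_split; apply: eq_bigr => i _.
rewrite !mulr_sumr -big_split; apply: eq_bigr => j _.
rewrite !mulr_sumr -big_split; apply: eq_bigr => k _.
rewrite !mulr_sumr -big_split; apply: eq_bigr => l _.
rewrite !mxE /=; ring.
Qed.

Lemma curv_xx x z w : curv4 Rm x x z w = 0.
Proof.
case: HRm => H1 _ _ _.
set S := curv4 _ _ _ _ _.
suff : S = - S by lra.
rewrite {1}/S /curv4 exchange_big /= -sumrN; apply: eq_bigr => i _.
rewrite -sumrN; apply: eq_bigr => j _.
rewrite -sumrN; apply: eq_bigr => k _.
rewrite -sumrN; apply: eq_bigr => l _.
rewrite H1; ring.
Qed.

Lemma curv_zz x y z : curv4 Rm x y z z = 0.
Proof.
case: HRm => _ H2 _ _.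
set S := curv4 _ _ _ _ _.
suff : S = - S by lra.
rewrite {1}/S /curv4 -sumrN; apply: eq_bigr => i _.
rewrite -sumrN; apply: eq_bigr => j _.
rewrite [in LHS]exchange_big /= -sumrN; apply: eq_bigr => k _.
rewrite -sumrN; apply: eq_bigr => l _.
rewrite H2; ring.
Qed.

Definition Mx (x : vec4 R) (j k : 'I_4) : R :=
  \sum_(i < 4) \sum_(l < 4) Rm i j k l * x 0 i * x 0 l.

Lemma curv_quad x y :
  curv4 Rm x y y x = \sum_(j < 4) \sum_(k < 4) y 0 j * y 0 k * Mx x j k.
Proof.
rewrite /curv4 exchange_big /=; apply: eq_bigr => j _.
rewrite exchange_big /=; apply: eq_bigr => k _.
rewrite /Mx mulr_sumr; apply: eq_bigr => i _.
rewrite mulr_sumr; apply: eq_bigr => l _.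
ring.
Qed.

Lemma trace_Mx x : \sum_(j < 4) Mx x j j = 0.
Proof.
case: HRm => H1 H2 _ _.
rewrite /Mx exchange_big /=.
rewrite big1 // => i _.
rewrite exchange_big /= big1 // => l _.
have -> : \sum_(j < 4) Rm i j j l * x 0 i * x 0 l =
   (\sum_(j < 4) Rm j i l j) * x 0 i * x 0 l.
  rewrite !mulr_suml; apply: eq_bigr => j _.
  by rewrite H1 H2 opprK.
by have := Hric i l; rewrite /ricci => ->; rewrite !mul0r.
Qed.

Section Frame.
Variable f : 'I_4 -> vec4 R.
Hypothesis f_orth : forall r s, r != s -> dot4 (f r) (f s) = 0.
Hypothesis f_nz : forall r, dot4 (f r) (f r) != 0.

Definition Fm : 'M[R]_4 := \matrix_(r, j) f r 0 j.
Definition Dm : 'M[R]_4 := diag_mx (\row_r (dot4 (f r) (f r))^-1).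

Lemma complete j k :
  \sum_(r < 4) f r 0 j * f r 0 k / dot4 (f r) (f r) = (j == k)%:R.
Proof.
have H : Fm *m (Fm^T *m Dm) = 1%:M.
  rewrite mulmxA; apply/matrixP => a b.
  rewrite /Dm mul_mx_diag !mxE.
  have -> : \sum_(c < 4) Fm a c * Fm^T c b = dot4 (f a) (f b).
    by rewrite /dot4; apply: eq_bigr => c _; rewrite !mxE.
  have [->|ne] := eqVneq a b.
    by rewrite mulfV.
  by rewrite f_orth // mul0r.
have := mulmx1C H => /matrixP /(_ j k).
rewrite !mxE => <-.
apply: eq_bigr => r _.
rewrite /Dm mul_mx_diag !mxE; ring.
Qed.

Lemma ricci_frame x :
  \sum_(r < 4) curv4 Rm x (f r) (f r) x / dot4 (f r) (f r) = 0.
Proof.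
transitivity (\sum_(j < 4) Mx x j j); last exact: trace_Mx.
under eq_bigr => r _ do rewrite curv_quad mulr_suml.
rewrite exchange_big /=; apply: eq_bigr => j _.
under eq_bigr => r _ do rewrite mulr_suml.
rewrite exchange_big /=.
rewrite (bigD1 j) //= [X in _ + X]big1 ?addr0.
  have E := complete j j; rewrite eqxx /= in E.
  transitivity (Mx x j j * (\sum_(r<4) f r 0 j * f r 0 j / dot4 (f r) (f r))); last by rewrite E mulr1.
  rewrite mulr_sumr.
  by apply: eq_bigr => r _; ring.
move=> k /negbTE nkj.
have : \sum_(r < 4) f r 0 j * f r 0 k / dot4 (f r) (f r) = 0.
  by rewrite complete eq_sym nkj.
move=> E; transitivity (Mx x j k * (\sum_(r<4) f r 0 j * f r 0 k / dot4 (f r) (f r))); last by rewrite E mulr0.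
rewrite mulr_sumr.
by apply: eq_bigr => r _; ring.
Qed.

End Frame.
Lemma dot0r (x : vec4 R) : dot4 x 0 = 0.
Proof. by rewrite /dot4 big1 // => i _; rewrite mxE mulr0. Qed.

Lemma orth_indep (x y : vec4 R) : dot4 x y = 0 -> dot4 x x != 0 -> dot4 y y != 0 ->
  lin_indep2 x y.
Proof.
move=> hxy hx hy a b H.
have e1 := dot0r x; rewrite -H dotDr hxy mulr0 addr0 in e1.
have e2 := dot0r y; rewrite -H dotDr (@dotC _ y x) hxy mulr0 add0r in e2.
move/eqP: e1; rewrite mulf_eq0 (negbTE hx) orbF => /eqP ->.
by move/eqP: e2; rewrite mulf_eq0 (negbTE hy) orbF => /eqP ->.
Qed.

Lemma sect_orth (x y : vec4 R) : dot4 x y = 0 ->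
  sectional Rm x y = curv4 Rm x y y x / (dot4 x x * dot4 y y).
Proof. by move=> h; rewrite /sectional h expr2 mulr0 subr0. Qed.

Lemma pointwise (u v : vec4 R) : lin_indep2 u v -> exists w1 w2,
  lin_indep2 u w1 /\ lin_indep2 u w2 /\
  sectional Rm u w1 + sectional Rm u w2 = - sectional Rm u v.
Proof.
move=> Hi.
have u0 : dot4 u u != 0.
  apply/eqP => /dot_eq0 u0.
  have [] := Hi 1 0; first by rewrite u0 scaler0 scale0r addr0.
  by move=> /eqP; rewrite oner_eq0.
have [f2 Hf2] : exists f2, f2 = dot4 u u *: v + (- dot4 u v) *: u by eexists.
have h12 : dot4 u f2 = 0 by rewrite Hf2 dotDr; ring.
have n2E : dot4 f2 f2 = dot4 u u * (dot4 u u * dot4 v v - dot4 u v ^+ 2).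
  by rewrite Hf2 !dot4E !mxE /=; ring.
have f2nz : dot4 f2 f2 != 0.
  apply/eqP => /dot_eq0 H0.
  have [] := Hi (- dot4 u v) (dot4 u u); first by rewrite addrC -Hf2.
  by move=> _ /eqP; rewrite (negbTE u0).
have c2E : curv4 Rm u f2 f2 u = dot4 u u ^+ 2 * curv4 Rm u v v u.
  rewrite Hf2 curv_lin2 !curv_lin3 !curv_xx !curv_zz; ring.
have [p Hp] : exists p, p = qmul (qconj u) f2 by eexists.
have [r [r0 [rp rr]]] : exists r : vec4 R, r 0 o0 = 0 /\ dot4 r p = 0 /\ dot4 r r != 0.
  have [h|h] := eqVneq (p 0 o1 ^+ 2 + p 0 o2 ^+ 2) 0.
    exists (mk4 0 1 0 0); rewrite !dot4E /mk4 !mxE /=; split => //; split.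
      have h1 : p 0 o1 ^+ 2 = 0.
        have := sqr_ge0 (p 0 o1); have := sqr_ge0 (p 0 o2); lra.
      move/eqP: h1; rewrite sqrf_eq0 => /eqP ->; ring.
    have -> : 0 * 0 + 1 * 1 + 0 * 0 + 0 * 0 = 1 :> R by ring.
    exact: oner_neq0.
  exists (mk4 0 (- p 0 o2) (p 0 o1) 0); rewrite !dot4E /mk4 !mxE /=; split => //; split.
    ring.
  have -> : 0 * 0 + - p 0 o2 * - p 0 o2 + p 0 o1 * p 0 o1 + 0 * 0 =
     p 0 o1 ^+ 2 + p 0 o2 ^+ 2 by ring.
  exact: h.
have o13 : dot4 u (qmul u r) = 0 by rewrite dotC Q1.
have o14 : dot4 u (qmul f2 r) = 0 by rewrite dotC Q3 // -Hp rp oppr0.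
have o23 : dot4 f2 (qmul u r) = 0 by rewrite dotC Q2 -Hp rp.
have o24 : dot4 f2 (qmul f2 r) = 0 by rewrite dotC Q1.
have o34 : dot4 (qmul u r) (qmul f2 r) = 0 by rewrite Q4 h12 mulr0.
have n3 : dot4 (qmul u r) (qmul u r) != 0 by rewrite Q4 mulf_neq0.
have n4 : dot4 (qmul f2 r) (qmul f2 r) != 0 by rewrite Q4 mulf_neq0.
pose f := fun i : 'I_4 => nth 0 [:: u; f2; qmul u r; qmul f2 r] i.
have f_orth : forall i j, i != j -> dot4 (f i) (f j) = 0.
  move=> [[|[|[|[|i]]]] Hi'] [[|[|[|[|j]]]] Hj'] //= _; rewrite /f /=;
    rewrite ?(@dotC _ f2 u) ?(@dotC _ (qmul u r) u) ?(@dotC _ (qmul f2 r) u)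
            ?(@dotC _ (qmul u r) f2) ?(@dotC _ (qmul f2 r) f2)
            ?(@dotC _ (qmul f2 r) (qmul u r)) //.
have f_nz : forall i, dot4 (f i) (f i) != 0.
  by move=> [[|[|[|[|i]]]] Hi'] //=; rewrite /f /=.
have E := @ricci_frame f f_orth f_nz u.
rewrite !big_ord_recl big_ord0 /= /f /= curv_xx mul0r add0r addr0 c2E n2E in E.
exists (qmul u r), (qmul f2 r); split; first exact: orth_indep.
split; first exact: orth_indep.
rewrite (sect_orth _ _ o13) (sect_orth _ _ o14) /sectional.
have D0 : dot4 u u * dot4 v v - dot4 u v ^+ 2 != 0.
  by apply: contraNneq f2nz => h; rewrite n2E h mulr0.
set c3 := curv4 Rm u (qmul u r) _ _ in E *.
set c4 := curv4 Rm u (qmul f2 r) _ _ in E *.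
set N3 := dot4 (qmul u r) _ in E n3 *.
set N4 := dot4 (qmul f2 r) _ in E n4 *.
set D := _ - _ in E D0 *.
clearbody D.
set a := dot4 u u in E u0 *.
set c := curv4 Rm u v v u in E *.
clearbody c3 c4 N3 N4 a c.
have -> : c3 / (a * N3) + c4 / (a * N4) = (c3 / N3 + c4 / N4) / a by field; rewrite ?u0 ?n3 ?n4.
have -> : c3 / N3 + c4 / N4 = - (a ^+ 2 * c / (a * D)).
  move: E; set X := a ^+ 2 * c / (a * D); lra.
field; by rewrite ?u0 ?D0.
Qed.

End Curv.

Theorem corollary2p4 (R : realType) (Rm : 'I_4 -> 'I_4 -> 'I_4 -> 'I_4 -> R) :
  is_curvature_tensor Rm -> ricci_flat Rm ->
  - (1 / 2) * Kmin Rm <= Kmax Rm /\ Kmax Rm <= - 2 * Kmin Rm.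
Proof.
move=> HRm Hric; rewrite /Kmin /Kmax.
apply: set_ineq => x [u [v [Hi ->]]].
have [w1 [w2 [I1 [I2 E]]]] := @pointwise R Rm HRm Hric u v Hi.
have [h|h] := lerP (sectional Rm u w1) (sectional Rm u w2).
  split.
    by exists (sectional Rm u w1); split; [exists u, w1 | lra].
  by exists (sectional Rm u w2); split; [exists u, w2 | lra].
split.
  by exists (sectional Rm u w2); split; [exists u, w2 | lra].
by exists (sectional Rm u w1); split; [exists u, w1 | lra].
Qed.
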